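(* Let $G$ be a nonabelian finite simple group and $S$ a component of $\hat Y(G)$ whose type (genus and cell structure) occurs exactly $k$ times among the components of $\hat Y(G)$, where $k!<|G|$. Then the subquotient $\bar Q_S$ associated to $S$ (for the conjugation action of $G$) equals $G$. If moreover $S$ is non-equivar, then $G=\bar Q_S$ is the group of orientation preserving automorphisms of the cell structure of $S$.
   Context: Construction: for a finite nonabelian group $G$, $X(G)$ is the 2-dimensional simplicial complex with vertices $(g,1)$ (''type 1'') and $(g,2)$ (''type 2''), $g\in G$, and oriented triangles $[(a,1),(b,1),(ab,2)]$ for $ab\ne ba$; $\hat Y(G)$ is its canonical resolution of singularities (vertices whose links are several circles are split, one vertex per circle), a disjoint union of closed connected oriented triangulated surfaces called components. Each component has a closed 2-cell structure: 0-cells the type 1 vertices, 1-cells the edges joining type 1 vertices, 2-cells the unions of triangles around a type 2 vertex. For a component $S$ containing the edge $[(x,1),(y,1)]$, $G$ acts by conjugation $(g,i)\mapsto(hgh^{-1},i)$; $G_S$ is the stabilizer of $S$, and $\bar Q_S=G_S/(C(x)\cap C(y))$ ($C(\cdot)$ = centralizer), which acts faithfully on $S$. $S$ is non-equivar if the valencies (numbers of incident 2-cells) $\lambda_1$ of $(x,1)$ and $\lambda_2$ of $(y,1)$ differ, i.e. its Schläfli symbol is $\{n,\lambda_1\text{-}\lambda_2\}$ with $\lambda_1\ne\lambda_2$. *)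

(* Defs.v *)
From HB Require Import structures.
From mathcomp Require Import all_boot all_order all_fingroup.
Set Implicit Arguments. Unset Strict Implicit. Unset Printing Implicit Defensive.
Local Open Scope group_scope.

Section XG.
Variable gT : finGroupType.

(* The pair t = (a,b) with ab <> ba encodes the oriented triangle
   [(a,1),(b,1),(ab,2)] of X(G) (corner 1 = (a,1), corner 2 = (b,1),
   corner 3 = (ab,2)).  Note x ^ y = y^-1 * x * y in MathComp. *)
Definition is_tri (t : gT * gT) : bool := t.1 * t.2 != t.2 * t.1.

(* The other triangle through edge {corner1,corner2} of t. *)
Definition s12 (t : gT * gT) : gT * gT := (t.2, t.1).
(* The other triangle through edge {corner2,corner3} of t: (b, b^-1 a b);
   that edge is its edge {corner3,corner1}. *)
Definition s23 (t : gT * gT) : gT * gT := (t.2, t.1 ^ t.2).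
(* Inverse of s23: the other triangle through edge {corner3,corner1}: (a b a^-1, a). *)
Definition s31 (t : gT * gT) : gT * gT := (t.2 ^ t.1^-1, t.1).

(* Since X(G) is a
   pseudo-surface (every edge lies in exactly two triangles), the components
   of the resolution \hat Y(G) are the classes of triangles for the
   transitive closure of edge-adjacency. *)
Definition tri_adj : rel (gT * gT) := fun t u =>
  [&& is_tri t, is_tri u & [|| u == s12 t, u == s23 t | t == s23 u]].

Definition comp_of (t : gT * gT) : {set gT * gT} := [set u | connect tri_adj t u].

Definition is_component (S : {set gT * gT}) : bool :=
  [exists t, is_tri t && (S == comp_of t)].

(* Conjugation action of g on triangles (the paper's h g h^-1 with h = g^-1). *)
Definition conjT (g : gT) (t : gT * gT) : gT * gT := (t.1 ^ g, t.2 ^ g).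

Definition comp_stab (S : {set gT * gT}) : {set gT} := [set g | conjT g @: S == S].

(* Orientation-preserving isomorphism of cell structures S -> S' (on triangles,
   i.e. on the flags (2-cell, boundary edge) of the cell structure). *)
Definition ori_iso (S S' : {set gT * gT}) (f : {perm gT * gT}) : bool :=
  (f @: S == S') &&
  [forall t in S, (f (s12 t) == s12 (f t)) && (f (s23 t) == s23 (f t))].

(* Orientation-reversing isomorphism: corners 1 and 2 are exchanged. *)
Definition rev_iso (S S' : {set gT * gT}) (f : {perm gT * gT}) : bool :=
  (f @: S == S') &&
  [forall t in S, (f (s12 t) == s12 (f t)) && (f (s23 t) == s31 (f t))].

Definition same_type (S S' : {set gT * gT}) : bool :=
  [exists f, ori_iso S S' f || rev_iso S S' f].

(* Valency (number of incident 2-cells) of the resolved vertex at corner 1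
   of triangle t: the rotation around that vertex is s23 \o s12, each step
   passing one 2-cell. *)
Definition valency (t : gT * gT) : nat := fingraph.order (fun u => s23 (s12 u)) t.

(* Non-equivar: the valencies of the two endpoints of a type-1 edge differ. *)
Definition non_equivar (S : {set gT * gT}) : bool :=
  [exists t in S, valency t != valency (s12 t)].

End XG.

(* Main.v *)
Require Import Defs.
From HB Require Import structures.
From mathcomp Require Import all_boot all_order all_fingroup all_solvable.
Set Implicit Arguments. Unset Strict Implicit. Unset Printing Implicit Defensive.
Local Open Scope group_scope.
Local Notation s12 := Defs.s12.
Local Notation s23 := Defs.s23.
Local Notation s31 := Defs.s31.

Section Aux.
Variable gT : finGroupType.
Implicit Types (t u : gT * gT) (g h : gT).

Lemma conjT_comp g h t : conjT h (conjT g t) = conjT (g * h) t.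
Proof. by rewrite /conjT !conjgM. Qed.

Lemma conjT1 t : conjT 1 t = t.
Proof. by case: t => a b; rewrite /conjT !conjg1. Qed.

Lemma conjT_inj g : injective (@conjT gT g).
Proof. move=> [a b] [c d] [/conjg_inj -> /conjg_inj ->]. done. Qed.

Lemma conjTK g t : conjT g^-1 (conjT g t) = t.
Proof. by rewrite conjT_comp mulgV conjT1. Qed.

Lemma conjTKV g t : conjT g (conjT g^-1 t) = t.
Proof. by rewrite conjT_comp mulVg conjT1. Qed.

Lemma s12_conj g t : s12 (conjT g t) = conjT g (s12 t).
Proof. by []. Qed.

Lemma s23_conj g t : s23 (conjT g t) = conjT g (s23 t).
Proof. by case: t => a b; rewrite /s23 /conjT /= [in RHS]conjJg. Qed.

Lemma s31_conj g t : s31 (conjT g t) = conjT g (s31 t).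
Proof. by case: t => a b; rewrite /s31 /conjT /= [in RHS]conjJg conjVg. Qed.

Lemma s12K t : s12 (s12 t) = t. Proof. by case: t. Qed.

Lemma s23E t : s23 t = conjT t.2 (s12 t).
Proof. by case: t => a b; rewrite /conjT /= [b ^ b]conjgE mulKg. Qed.

Lemma s31E t : s31 t = conjT t.1^-1 (s12 t).
Proof. by case: t => a b; rewrite /conjT /= [a ^ a^-1]conjgE invgK mulgV mulg1. Qed.

Lemma s23K t : s31 (s23 t) = t.
Proof. by case: t => a b; rewrite /s31 /s23 /= conjgK. Qed.

Lemma s31K t : s23 (s31 t) = t.
Proof. by case: t => a b; rewrite /s31 /s23 /= conjgKV. Qed.

Lemma s23_inj : injective (@s23 gT).
Proof. exact: can_inj s23K. Qed.

Lemma is_tri_conj g t : is_tri (conjT g t) = is_tri t.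
Proof.
case: t => a b; rewrite /is_tri /conjT /= -!conjMg.
by apply/negbLR; rewrite negbK (inj_eq (@conjg_inj _ g)).
Qed.

Lemma tri_adj_conj g t u : tri_adj (conjT g t) (conjT g u) = tri_adj t u.
Proof.
rewrite /tri_adj !is_tri_conj s12_conj s23_conj s23_conj !(inj_eq (@conjT_inj g)).
by [].
Qed.

Lemma connect_conj g t u : connect (@tri_adj gT) t u -> connect (@tri_adj gT) (conjT g t) (conjT g u).
Proof.
case/connectP=> p pth ->; apply/connectP; exists (map (conjT g) p).
  elim: p t pth => [|v q IH] x //= /andP[xv pq].
  by rewrite tri_adj_conj xv IH.
by rewrite last_map.
Qed.

Lemma comp_of_conj g t : conjT g @: comp_of t = comp_of (conjT g t).
Proof.
apply/setP=> u; rewrite inE; apply/imsetP/idP.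
  by case=> v; rewrite inE => /(connect_conj g) ? ->.
move=> /(connect_conj g^-1); rewrite conjTK => c; exists (conjT g^-1 u).
  by rewrite inE. by rewrite conjTKV.
Qed.

Lemma comp_ind t0 (P : gT * gT -> Prop) : P t0 ->
  (forall t u, connect (@tri_adj gT) t0 t -> tri_adj t u -> P t -> P u) ->
  forall u, connect (@tri_adj gT) t0 u -> P u.
Proof.
move=> P0 step u /connectP [p pth ->].
suff H : forall (p : seq (gT * gT)) t, connect (@tri_adj gT) t0 t -> P t -> path.path (@tri_adj gT) t p -> P (last t p).
  by apply: H (connect0 _ _) P0 pth.
elim=> [|v q IH] t ct Pt //= /andP[tv pq].
apply: IH pq; first exact: connect_trans ct (connect1 tv).
exact: step tv Pt.
Qed.

Lemma tri_adj_cases t u : tri_adj t u -> [/\ is_tri t, is_tri u & [\/ u = s12 t, u = s23 t | u = s31 t]].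
Proof.
case/and3P=> ht hu H; split=> //; case/or3P: H => /eqP ->.
- by constructor 1. - by constructor 2. - by constructor 3; rewrite s23K.
Qed.


Lemma comp_tri t0 u : is_tri t0 -> u \in comp_of t0 -> is_tri u.
Proof.
move=> h0; rewrite inE; move: u; apply: (@comp_ind t0 (fun u => is_tri u)) => // t v _.
by case/tri_adj_cases.
Qed.

Lemma comp_orbit t0 u : u \in comp_of t0 ->
  exists h, u = conjT h t0 \/ u = conjT h (s12 t0).
Proof.
rewrite inE; move: u; apply: (@comp_ind t0 (fun u => exists h, u = conjT h t0 \/ u = conjT h (s12 t0))).
  by exists 1; left; rewrite conjT1.
move=> t v _ /tri_adj_cases [_ _ H] [h Ht].
have E1 : forall w, w = s12 t -> exists h, w = conjT h t0 \/ w = conjT h (s12 t0).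
  move=> w ->; exists h; case: Ht => ->; [right | left]; by rewrite // s12_conj ?s12K.
case: H => ->; first exact: E1.
  have [h' Hh'] := E1 _ erefl; exists (h' * t.2).
  by rewrite s23E; case: Hh' => ->; [left|right]; rewrite conjT_comp.
have [h' Hh'] := E1 _ erefl; exists (h' * t.1^-1).
by rewrite s31E; case: Hh' => ->; [left|right]; rewrite conjT_comp.
Qed.

Definition commT (z : gT) (t : gT * gT) := fingroup.commute z t.1 /\ fingroup.commute z t.2.

Lemma commute_conj (z a b : gT) : fingroup.commute z a -> fingroup.commute z b -> fingroup.commute z (a ^ b).
Proof. by move=> za zb; rewrite conjgE; apply: commuteM; [apply: commuteV|apply: commuteM]. Qed.

Lemma commT_s23 z t : commT z (s23 t) <-> commT z t.
Proof.
case: t => a b; rewrite /commT /=; split=> [[zb zab]|[za zb]]; split=> //.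
  by rewrite -(conjgK b a); apply: commute_conj => //; apply: commuteV.
exact: commute_conj.
Qed.

Lemma commT_comp t0 u z : u \in comp_of t0 -> (commT z u <-> commT z t0).
Proof.
rewrite inE => c.
suff: commT z u <-> commT z t0 by [].
move: u c; apply: (@comp_ind t0 (fun u => commT z u <-> commT z t0)) => // t v _ /tri_adj_cases [_ _ H] IH.
case: H => ->.
- by case: t IH => a b; rewrite /commT /=; tauto.
- by move: (commT_s23 z t) IH; tauto.
- by move: (commT_s23 z (s31 t)) IH; rewrite s31K; tauto.
Qed.

Lemma order_conj (A : pred (gT * gT)) (r h : gT * gT -> gT * gT) t :
  injective h -> (forall u, A u -> A (r u)) -> (forall u, A u -> h (r u) = r (h u)) ->
  A t -> fingraph.order r (h t) = fingraph.order r t.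
Proof.
move=> hi Ac hc At.
have It : forall n, A (iter n r t) /\ h (iter n r t) = iter n r (h t).
  elim=> [|n [An IHn]] //=; split; first exact: Ac.
  by rewrite hc // IHn.
rewrite /fingraph.order -(card_imset (mem (fconnect r t)) hi); apply: eq_card => y.
apply/idP/imsetP.
  move=> /iter_findex <-; exists (iter (findex r (h t) y) r t); first exact: fconnect_iter.
  by case: (It (findex r (h t) y)).
case=> x /iter_findex <- ->; case: (It (findex r t x)) => _ ->; exact: fconnect_iter.
Qed.


Lemma imsetT_comp g h (X : {set gT * gT}) : conjT h @: (conjT g @: X) = conjT (g * h) @: X.
Proof. by rewrite -imset_comp; apply: eq_imset => t; rewrite /= conjT_comp. Qed.

Lemma imsetT1 (X : {set gT * gT}) : conjT 1 @: X = X.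
Proof. by rewrite (eq_imset _ (@conjT1)) imset_id. Qed.

Lemma imsetTK g (X : {set gT * gT}) : conjT g^-1 @: (conjT g @: X) = X.
Proof. by rewrite imsetT_comp mulgV imsetT1. Qed.

Lemma imsetTKV g (X : {set gT * gT}) : conjT g @: (conjT g^-1 @: X) = X.
Proof. by rewrite imsetT_comp mulVg imsetT1. Qed.

Lemma normal_setT (H : {group gT}) : (forall z g, z \in H -> z ^ g \in H) -> H <| [set: gT].
Proof.
move=> cl; apply/normalP; split; first exact: subsetT.
move=> g _; apply/eqP; rewrite eqEsubset; apply/andP; split.
  by apply/subsetP=> x; rewrite mem_conjg => /(cl _ g); rewrite conjgKV.
by apply/subsetP=> x xH; rewrite mem_conjg; apply: cl.
Qed.

Lemma conj_component g (X : {set gT * gT}) : is_component X -> is_component (conjT g @: X).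
Proof.
case/existsP=> t /andP[ht /eqP ->]; apply/existsP; exists (conjT g t).
by rewrite is_tri_conj ht comp_of_conj eqxx.
Qed.

Definition pconj g : {perm gT * gT} := perm (@conjT_inj g).

Lemma conj_same_type g (S X : {set gT * gT}) : same_type S X -> same_type S (conjT g @: X).
Proof.
case/existsP=> f Hf; apply/existsP; exists (f * pconj g).
have Him : (f * pconj g) @: S = conjT g @: (f @: S).
  by rewrite -imset_comp; apply: eq_imset => t /=; rewrite permM permE.
case/orP: Hf => /andP[/eqP fS /forallP H]; [apply/orP; left|apply/orP; right];
  rewrite /ori_iso /rev_iso Him fS eqxx /=; apply/forallP => t; apply/implyP => tS;
  move: (H t); rewrite tS /= => /andP[/eqP h1 /eqP h2]; rewrite !permM !permE h1 h2.
- by rewrite s12_conj s23_conj !eqxx.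
- by rewrite s12_conj s31_conj !eqxx.
Qed.

Lemma commute_conjg (a b g : gT) : fingroup.commute a b -> fingroup.commute (a ^ g) (b ^ g).
Proof. by rewrite /fingroup.commute -!conjMg => ->. Qed.

Lemma conjT_eq_commute (x g h : gT) : x ^ g = x ^ h -> fingroup.commute (g * h^-1) x.
Proof.
move=> E; have E' : x ^ (g * h^-1) = x by rewrite conjgM E conjgK.
by rewrite /fingroup.commute [in RHS]conjgC E'.
Qed.

Lemma comp_closed t0 u : is_tri t0 -> u \in comp_of t0 ->
  s12 u \in comp_of t0 /\ s23 u \in comp_of t0.
Proof.
move=> h0 uS; have hu := comp_tri h0 uS.
have h12 : is_tri (s12 u) by case: u hu {uS} => a b; rewrite /is_tri /= eq_sym.
move: uS; rewrite !inE => c; split; apply: connect_trans c (connect1 _).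
  by rewrite /tri_adj hu h12 eqxx.
by rewrite /tri_adj hu s23E is_tri_conj h12 eqxx orbT.
Qed.

End Aux.

Section Part1.
Variable gT : finGroupType.
Variable S : {set gT * gT}.
Let C := [set S' : {set gT * gT} | is_component S' && same_type S S'].

Lemma C_conj g X : X \in C -> conjT g @: X \in C.
Proof. by rewrite !inE => /andP[h1 h2]; rewrite conj_component // conj_same_type. Qed.

Let act g X := if X \in C then conjT g @: X else X.

Lemma act_can g : cancel (act g) (act g^-1).
Proof.
move=> X; rewrite /act; case XC: (X \in C); last by rewrite XC.
by rewrite C_conj // imsetTK.
Qed.

Let phi g : {perm {set gT * gT}} := perm (can_inj (act_can g)).

Let K := [set g : gT | [forall X in C, conjT g @: X == X]].

Lemma K_group : group_set K.
Proof.
apply/group_setP; split.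
  by rewrite inE; apply/forall_inP => X _; rewrite imsetT1.
move=> g h; rewrite !inE => /forall_inP Hg /forall_inP Hh; apply/forall_inP => X XC.
by rewrite -imsetT_comp (eqP (Hg X XC)) Hh.
Qed.

Lemma K_normal : (Group K_group) <| [set: gT].
Proof.
apply: normal_setT => z g; rewrite /= !inE => /forall_inP Hz; apply/forall_inP => X XC.
rewrite conjgE -!imsetT_comp (eqP (Hz _ (C_conj g^-1 XC))).
by rewrite imsetTKV.
Qed.

Lemma phi_inj : K = [1 gT] -> injective phi.
Proof.
move=> K1 g h E.
have gh : g * h^-1 \in K.
  rewrite inE; apply/forall_inP => X XC.
  have := congr1 (fun p : {perm {set gT * gT}} => p X) E.
  rewrite /phi !permE /act XC => e.
  by rewrite -imsetT_comp e imsetTK.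
move: gh; rewrite K1 => /set1gP e1.
by rewrite -(mulgKV h g) e1 mul1g.
Qed.

Lemma phi_on g : phi g \in perm_on C.
Proof.
apply/subsetP => X; rewrite inE /phi permE /act; case: ifP => // _.
by rewrite eqxx.
Qed.

Lemma stab_all k : simple [set: gT] -> is_component S ->
  #|C| = k -> k`! < #|[set: gT]| -> comp_stab S = [set: gT].
Proof.
move=> simG cS Ck kG.
have SC : S \in C.
  rewrite inE cS /=; apply/existsP; exists 1; apply/orP; left.
  rewrite /ori_iso; apply/andP; split.
    by rewrite (eq_imset _ (@perm1 _)) imset_id.
  by apply/forall_inP => t _; rewrite !perm1 !eqxx.
case/simpleP: simG => _ /(_ _ K_normal) [K1|KT].
  exfalso; move: kG; apply/negP; rewrite -leqNgt -Ck -card_perm.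
  rewrite -(card_imset _ (phi_inj K1)); apply: subset_leq_card.
  by apply/subsetP => p /imsetP [g _ ->]; apply: phi_on.
apply/setP => g; rewrite !inE.
have : g \in K by rewrite [K]KT inE.
by rewrite inE => /forall_inP /(_ _ SC).
Qed.

End Part1.

Theorem lemma3p6 (gT : finGroupType) (S : {set gT * gT}) (k : nat) :
  simple [set: gT] -> ~~ abelian [set: gT] ->
  is_component S ->
  #|[set S' : {set gT * gT} | is_component S' && same_type S S']| = k ->
  k`! < #|[set: gT]| ->
  (comp_stab S = [set: gT] /\
   (forall x y : gT, (x, y) \in S -> ('C[x] :&: 'C[y] = [1 gT])%g)) /\
  (non_equivar S ->
     (forall f : {perm gT * gT}, ori_iso S S f ->
        exists g : gT, {in S, forall t, f t = conjT g t}) /\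
     (forall g h : gT, {in S, forall t, conjT g t = conjT h t} -> g = h)).
Proof.
move=> simG nab cS Ck kG.
have stab := @stab_all gT S k simG cS Ck kG.
case/existsP: cS => t0 /andP [h0 /eqP SE].
have t0S : t0 \in S by rewrite SE inE connect0.
have P2 : forall x y : gT, (x, y) \in S -> ('C[x] :&: 'C[y] = [1 gT])%g.
  move=> x y xyS; rewrite SE in xyS.
  have Hm : forall z, z \in 'C[x] :&: 'C[y] <-> commT z t0.
    move=> z; rewrite inE; split.
      by case/andP=> /cent1P a /cent1P b; apply/(commT_comp z xyS).
    by case/(commT_comp z xyS) => /= a b; apply/andP; split; apply/cent1P.
  have N : ('C[x] :&: 'C[y])%G <| [set: gT].
    apply: normal_setT => z g /Hm zC; apply/Hm.
    have gS : conjT g^-1 t0 \in S.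
      have : g^-1 \in comp_stab S by rewrite stab inE.
      by rewrite inE => /eqP <-; apply: imset_f.
    rewrite SE in gS; case/(commT_comp z gS): zC => /= a b.
    by split; [move: (commute_conjg g a) | move: (commute_conjg g b)]; rewrite conjgKV.
  case/simpleP: simG => _ /(_ _ N) [//|CT]; exfalso.
  have : x \in ('C[x] :&: 'C[y])%G by rewrite CT inE.
  rewrite inE => /andP[_ /cent1P e].
  by move: (comp_tri h0 xyS); rewrite /is_tri /= e eqxx.
split; first by split.
move=> ne.
have Vc : forall (g : gT) (t : gT * gT), valency (conjT g t) = valency t.
  move=> g t; rewrite /valency; apply: (order_conj (A := fun _ => true) (r := fun u => s23 (s12 u)) (h := conjT g)) => //; first exact: conjT_inj.
  by move=> u _; rewrite s12_conj s23_conj.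
split.
  move=> f /andP [/eqP fS /forall_inP Hf].
  have Scl : forall u, u \in S -> s12 u \in S /\ s23 u \in S.
    by move=> u; rewrite SE => uS; apply: comp_closed.
  have Vf : forall t, t \in S -> valency (f t) = valency t.
    move=> t tS; rewrite /valency; apply: (order_conj (A := fun u => u \in S) (r := fun u => s23 (s12 u)) (h := f)) => //; first exact: perm_inj.
      by move=> u uS; case: (Scl _ uS) => /Scl [_ ?] _.
    move=> u uS; case: (Scl _ uS) => u1 _.
    case/andP: (Hf _ u1) => _ /eqP ->; case/andP: (Hf _ uS) => /eqP -> _ //.
  have ft0S : f t0 \in S by rewrite -fS; apply: imset_f.
  rewrite SE in ft0S.
  case: (comp_orbit ft0S) => h [Eh|Eh]; last first.
    exfalso.
    have v0 : valency t0 = valency (s12 t0) by rewrite -Vf // Eh Vc.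
    move/existsP: ne => [t /andP[tS]]; apply/negP; rewrite negbK.
    rewrite SE in tS.
    by case: (comp_orbit tS) => h' [->|->]; rewrite s12_conj !Vc ?s12K v0.
  exists h => t; rewrite SE inE; move: t.
  apply: (@comp_ind _ t0 (fun u => f u = conjT h u)) => // t v ct adj IH.
  have tS : t \in S by rewrite SE inE.
  have vS : v \in S by rewrite SE inE (connect_trans ct (connect1 adj)).
  case: (tri_adj_cases adj) => _ _ [] E; rewrite E.
  - by case/andP: (Hf _ tS) => /eqP -> _; rewrite IH s12_conj.
  - by case/andP: (Hf _ tS) => _ /eqP ->; rewrite IH s23_conj.
  - apply: s23_inj; rewrite s23_conj s31K -IH.
    rewrite E in vS; case/andP: (Hf _ vS) => _ /eqP <-.
    by rewrite s31K.
move=> g h E.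
have := E t0 t0S; case: t0 t0S {h0 SE} => a b abS [ea eb].
have : g * h^-1 \in [1 gT].
  rewrite -(P2 _ _ abS) inE; apply/andP; split; apply/cent1P; exact: conjT_eq_commute.
by move/set1gP => e1; rewrite -(mulgKV h g) e1 mul1g.
Qed.
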